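(* Let $R$ be a commutative ring with identity whose set of zero-divisors $Z_R$ satisfies $Z_R\ne\{0\}$, let $n>1$, and let $r$ be the radius of the orthogonality graph $O(M_n(R))$. Then: (1) $2\le r\le 4$; (2) if $$\forall a_0\in Z_R\ \ \exists a_1,a_2\in R\setminus\{0\}\ \ \forall i,j\in\{0,1,2\},\ i\ne j:\ a_ia_j=0,$$ then $r\in\{2,3\}$; (3) $r=2$ if and only if there exists $c\in R\setminus\{0\}$ such that $\operatorname{Ann}(c)\cap\operatorname{Ann}(a)\ne 0$ for every $a\in Z_R$.
   Context: All rings are associative with identity. For a commutative ring $R$, $Z_R$ is the set of zero-divisors (including $0$) and $\operatorname{Ann}(a)=\{x\in R: ax=0\}$. The orthogonality graph $O(S)$ of a ring $S$ is the undirected graph whose vertices are the nonzero two-sided zero-divisors of $S$ (elements $x$ with $xy=0$ and $zx=0$ for some nonzero $y,z$), distinct vertices $x,y$ being adjacent iff $xy=yx=0$. $d(x,y)$ is graph distance, the eccentricity of a vertex $v$ is $\sup_w d(v,w)$ over all vertices $w$, and the radius is the minimum eccentricity over all vertices. *)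

(* Defs.v *)
From HB Require Import structures.
From mathcomp Require Import all_boot all_order all_algebra.
Set Implicit Arguments. Unset Strict Implicit. Unset Printing Implicit Defensive.
Import GRing.Theory.
Local Open Scope ring_scope.

Definition zero_divisor (R : comNzRingType) (a : R) : Prop :=
  exists x : R, x != 0 /\ a * x = 0.

Definition overtex (R : comNzRingType) (n : nat) (x : 'M[R]_n) : Prop :=
  x != 0 /\ (exists y : 'M[R]_n, y != 0 /\ x *m y = 0)
         /\ (exists z : 'M[R]_n, z != 0 /\ z *m x = 0).

Definition oadj (R : comNzRingType) (n : nat) (x y : 'M[R]_n) : Prop :=
  overtex x /\ overtex y /\ x != y /\ x *m y = 0 /\ y *m x = 0.

(* owithin k x y : d(x,y) <= k in O(M_n(R)). *)
Fixpoint owithin (R : comNzRingType) (n : nat) (k : nat) (x y : 'M[R]_n) : Prop :=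
  match k with
  | 0 => x = y
  | k'.+1 => owithin k' x y \/ exists z, owithin k' x z /\ oadj z y
  end.

Definition ecc_le (R : comNzRingType) (n : nat) (v : 'M[R]_n) (k : nat) : Prop :=
  forall w : 'M[R]_n, overtex w -> owithin k v w.

(* The radius of O(M_n(R)) is the (finite) natural number r:
   some vertex has eccentricity <= r, and every vertex has eccentricity >= r. *)
Definition is_radius (R : comNzRingType) (n : nat) (r : nat) : Prop :=
  (exists v : 'M[R]_n, overtex v /\ ecc_le v r) /\
  (forall v : 'M[R]_n, overtex v -> forall k, ecc_le v k -> (r <= k)%N).

(* Main.v *)
Require Import Defs.
From HB Require Import structures.
From mathcomp Require Import all_boot all_order all_algebra ring zify.
From Stdlib Require Import Classical.
Set Implicit Arguments. Unset Strict Implicit. Unset Printing Implicit Defensive.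
Import GRing.Theory.
Local Open Scope ring_scope.


Lemma min_ex (P : nat -> Prop) : (exists k, P k) ->
  exists m, P m /\ forall k, P k -> (m <= k)%N.
Proof.
move=> [k Pk]; elim/ltn_ind: k Pk => k IH Pk.
case: (classic (exists j, P j /\ (j < k)%N)) => [[j [Pj ljk]]|H].
  exact: IH j ljk Pj.
exists k; split => // j Pj; rewrite leqNgt; apply/negP => ljk; apply: H; eauto.
Qed.

Definition ext (t n : nat) (f : 'I_t -> 'I_n) (p : 'I_n) : 'I_t.+1 -> 'I_n :=
  fun i => if unlift ord_max i is Some j then f j else p.

Lemma ext_lift t n (f : 'I_t -> 'I_n) p j : ext f p (lift ord_max j) = f j.
Proof. by rewrite /ext liftK. Qed.

Lemma ext_max t n (f : 'I_t -> 'I_n) p : ext f p ord_max = p.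
Proof. by rewrite /ext unlift_none. Qed.

Lemma notin_range t n (f : 'I_t -> 'I_n) : (t < n)%N -> exists p, forall j, f j != p.
Proof.
move=> ltn; apply: NNPP => H.
have sub : [set: 'I_n] \subset [set f j | j in 'I_t].
  apply/subsetP => p _.
  have := not_ex_all_not _ _ H p => /not_all_ex_not [j] /negP; rewrite negbK => /eqP <-.
  by apply: imset_f.
have := subset_leq_card sub; rewrite cardsT card_ord.
have := leq_imset_card f 'I_t; rewrite card_ord => h1 h2.
by have := leq_trans h2 h1; rewrite leqNgt ltn.
Qed.

Lemma cofactor_row (R : comNzRingType) m (A B : 'M[R]_m.+1) i j :
  (forall k l, k != i -> A k l = B k l) -> cofactor A i j = cofactor B i j.
Proof.
move=> h; rewrite /cofactor; congr (_ * \det _); apply/matrixP => k l.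
by rewrite !mxE h // eq_sym neq_lift.
Qed.

Lemma cofactor_col (R : comNzRingType) m (A B : 'M[R]_m.+1) i j :
  (forall k l, l != j -> A k l = B k l) -> cofactor A i j = cofactor B i j.
Proof.
move=> h; rewrite /cofactor; congr (_ * \det _); apply/matrixP => k l.
by rewrite !mxE h // eq_sym neq_lift.
Qed.

Lemma detsub_n (R : comNzRingType) n (W : 'M[R]_n) x : x * \det W = 0 ->
  forall f g : 'I_n -> 'I_n, x * \det (mxsub f g W) = 0.
Proof.
move=> hx f g.
have -> : mxsub f g W = rowsub f 1%:M *m W *m colsub g 1%:M.
  rewrite -mulmxA mulmx_colsub mulmx1 mul_rowsub_mx mul1mx.
  by apply/matrixP => i j; rewrite !mxE.
rewrite !det_mulmx.
transitivity (\det (rowsub f 1%:M) * (x * \det W) * \det (colsub g (1%:M : 'M[R]_n))).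
  ring.
by rewrite hx mulr0 mul0r.
Qed.



Lemma core (R : comNzRingType) n t (W : 'M[R]_n) (x : R) (f g : 'I_t -> 'I_n) :
  (t < n)%N -> x * \det (mxsub f g W) != 0 ->
  (forall f g : 'I_t.+1 -> 'I_n, x * \det (mxsub f g W) = 0) ->
  exists A : 'M[R]_n, x *: A != 0 /\ W *m (x *: A) = 0 /\ (x *: A) *m W = 0.
Proof.
move=> ltn nz hk.
have [p0 hp0] := notin_range f ltn.
have [q0 hq0] := notin_range g ltn.
pose f' := ext f p0; pose g' := ext g q0.
pose S := mxsub f' g' W.
have C1 : x *: (colsub g' W *m \adj S) = 0.
  apply/matrixP => r i; rewrite !mxE.
  have := hk (fun k => if k == i then r else f' k) g'.
  rewrite (expand_det_row _ i) => h; etransitivity; last exact: h.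
  congr (_ * _); apply: eq_bigr => j _.
  rewrite !mxE eqxx; congr (_ * _); apply: cofactor_row => k l /negbTE kn.
  by rewrite !mxE kn.
have C2 : x *: (\adj S *m rowsub f' W) = 0.
  apply/matrixP => j c; rewrite !mxE.
  have := hk f' (fun k => if k == j then c else g' k).
  rewrite (expand_det_col _ j) => h; etransitivity; last exact: h.
  congr (_ * _); apply: eq_bigr => i _.
  rewrite !mxE eqxx mulrC; congr (_ * _); apply: cofactor_col => k l /negbTE kn.
  by rewrite !mxE kn.
exists (colsub g' 1%:M *m \adj S *m rowsub f' 1%:M); split; last split.
- have E : (colsub g' 1%:M *m \adj S *m rowsub f' (1%:M : 'M[R]_n)) q0 p0
           = \adj S ord_max ord_max.
    rewrite mxE (bigD1 ord_max) //= big1 ?addr0; last first.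
      move=> i ni; rewrite !mxE.
      rewrite eq_sym in ni; case/unlift_some: ni => i' -> _; rewrite /f' ext_lift.
      by rewrite (negbTE (hp0 i')) mulr0.
    rewrite !mxE /f' ext_max eqxx mulr1n mulr1.
    rewrite (bigD1 ord_max) //= big1 ?addr0; last first.
      move=> j nj; rewrite !mxE.
      rewrite eq_sym in nj; case/unlift_some: nj => j' -> _; rewrite /g' ext_lift.
      by rewrite eq_sym (negbTE (hq0 j')) mul0r.
    rewrite !mxE /g' ext_max eqxx mul1r. by [].
  apply/negP => /eqP /matrixP /(_ q0 p0); rewrite mxE E mxE /cofactor.
  have -> : row' ord_max (col' ord_max S) = mxsub f g W.
    by apply/matrixP => k l; rewrite !mxE /f' /g' !ext_lift.
  rewrite -signr_odd addnn odd_double expr0 mul1r mxE => /eqP.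
  by rewrite (negbTE nz).
- rewrite -scalemxAr !mulmxA mulmx_colsub mulmx1 scalemxAl C1 mul0mx //.
- have -> : forall (M : 'M[R]_n), (x *: M) *m W = x *: (M *m W).
    by move=> M; rewrite scalemxAl.
  rewrite -!mulmxA mul_rowsub_mx mul1mx scalemxAr C2 mulmx0 //.
Qed.

Lemma annG (R : comNzRingType) n (W : 'M[R]_n) (J : R -> Prop) :
  (exists x0, J x0 /\ x0 != 0 /\ x0 * \det W = 0) ->
  exists x (A : 'M[R]_n), J x /\ x *: A != 0 /\ W *m (x *: A) = 0 /\ (x *: A) *m W = 0.
Proof.
move=> [x0 [Jx0 [nx0 hx0]]].
pose P s := exists x, J x /\ x != 0 /\
   forall f g : 'I_s -> 'I_n, x * \det (mxsub f g W) = 0.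
have [s [Ps mins]] : exists s, P s /\ forall k, P k -> (s <= k)%N.
  apply: min_ex; exists n, x0; split => //; split => //; exact: detsub_n.
have sn : (s <= n)%N.
  by apply: mins; exists x0; split => //; split => //; exact: detsub_n.
case: s Ps mins sn => [|t] Ps mins sn.
  case: Ps => x [_ [nx hx]]; have := hx (fun i => match i with Ordinal _ h => False_rect _ (notF h) end) (fun i => match i with Ordinal _ h => False_rect _ (notF h) end).
  by rewrite det_mx00 mulr1 => /eqP; rewrite (negbTE nx).
case: Ps => x [Jx [nx hx]].
have : ~ forall f g : 'I_t -> 'I_n, x * \det (mxsub f g W) = 0.
  move=> H; have : (t.+1 <= t)%N by apply: mins; exists x.
  by rewrite ltnn.
move=> /not_all_ex_not [f] /not_all_ex_not [g] /eqP nz.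
have [A hA] := core sn nz hx.
by exists x, A.
Qed.



Definition ostep (R : comNzRingType) n (x y : 'M[R]_n) := x = y \/ oadj x y.

Lemma owithin_step (R : comNzRingType) n k (x y z : 'M[R]_n) :
  owithin k x y -> ostep y z -> owithin k.+1 x z.
Proof. by move=> h [<-|a]; [left | right; exists y]. Qed.

Lemma vertex_of (R : comNzRingType) n (x y : 'M[R]_n) :
  x != 0 -> y != 0 -> x *m y = 0 -> y *m x = 0 -> overtex x.
Proof. by move=> nx ny h1 h2; split => //; split; exists y. Qed.

Lemma ostep_orth (R : comNzRingType) n (x y : 'M[R]_n) :
  x != 0 -> y != 0 -> x *m y = 0 -> y *m x = 0 -> ostep x y.
Proof.
move=> nx ny h1 h2; case: (eqVneq x y) => [->|nxy]; first by left.
right; split; first exact: (vertex_of nx ny).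
split; first exact: (vertex_of ny nx).
by [].
Qed.

Lemma nz_entry (R : comNzRingType) n (v : 'M[R]_n) : v != 0 ->
  exists k l, v k l != 0.
Proof.
move=> nv; apply: NNPP => H; move/eqP: nv; apply; apply/matrixP => k l.
rewrite mxE; apply: NNPP => h; apply: H; exists k, l; exact/eqP.
Qed.

Lemma other (n : nat) (i0 i1 : 'I_n) : i0 != i1 -> forall a : 'I_n, exists b, b != a.
Proof.
move=> hi a; case: (eqVneq i0 a) => [<-|h]; first by exists i1; rewrite eq_sym.
by exists i0.
Qed.

Lemma mul_delta_entry (R : comNzRingType) n (A : 'M[R]_n) (k l m : 'I_n) :
  (A *m delta_mx l m) k m = A k l.
Proof.
rewrite mxE (bigD1 l) //= !mxE !eqxx mulr1 big1 ?addr0 // => j hj; rewrite !mxE (negbTE hj).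
by rewrite mulr0.
Qed.

Lemma delta_vertex (R : comNzRingType) n (i0 i1 : 'I_n) : i0 != i1 ->
  forall (y : R) (l m : 'I_n), y != 0 -> overtex (y *: delta_mx l m : 'M[R]_n).
Proof.
move=> hi y l m ny; have [p hp] := other hi m; have [q hq] := other hi l.
split; last split.
- apply/negP => /eqP /matrixP /(_ l m); rewrite !mxE !eqxx mulr1 => /eqP.
  by rewrite (negbTE ny).
- exists (delta_mx p p); split.
    by apply/negP => /eqP /matrixP /(_ p p); rewrite !mxE !eqxx => /eqP; rewrite oner_eq0.
  by rewrite -scalemxAl mul_delta_mx_cond eq_sym (negbTE hp) mulr0n scaler0.
- exists (delta_mx q q); split.
    by apply/negP => /eqP /matrixP /(_ q q); rewrite !mxE !eqxx => /eqP; rewrite oner_eq0.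
  by rewrite -scalemxAr mul_delta_mx_cond (negbTE hq) mulr0n scaler0.
Qed.

Lemma ecc_ge2 (R : comNzRingType) n (i0 i1 : 'I_n) : i0 != i1 ->
  forall v : 'M[R]_n, overtex v -> forall k, ecc_le v k -> (2 <= k)%N.
Proof.
move=> hi v hv k hk.
have [kk [l hkl]] := nz_entry (proj1 hv).
pose m := if delta_mx l i0 == v then i1 else i0.
have hw : overtex (delta_mx l m : 'M[R]_n).
  by have := delta_vertex hi l m (oner_neq0 R); rewrite scale1r.
have nwv : delta_mx l m != v.
  rewrite /m; case: (eqVneq (delta_mx l i0 : 'M[R]_n) v) => [e|ne] //; apply/eqP => e2.
  move: e; rewrite -e2 => /matrixP /(_ l i0); rewrite !mxE !eqxx (negbTE hi).
  by move=> /eqP; rewrite /= oner_eq0.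
have nvw : v *m delta_mx l m != 0.
  apply/negP => /eqP /matrixP /(_ kk m); rewrite mul_delta_entry mxE => /eqP.
  by rewrite (negbTE hkl).
have := hk _ hw; case: k hk => [|[|k]] // _.
- by move=> e; move: nwv; rewrite e eqxx.
- case=> [e|[z [e [_ [_ [_ [h _]]]]]]]; first by move: nwv; rewrite e eqxx.
  by move: nvw; rewrite e h eqxx.
Qed.



Lemma det_zd (R : comNzRingType) n (W : 'M[R]_n) : overtex W -> zero_divisor (\det W).
Proof.
move=> [_ [[Y [nY hY]] _]].
have h : (\det W) *: Y = 0 by rewrite -mul_scalar_mx -mul_adj_mx -mulmxA hY mulmx0.
have [k [l hkl]] := nz_entry nY; exists (Y k l); split => //.
by move/matrixP: h => /(_ k l); rewrite !mxE.
Qed.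

Lemma scal_orth (R : comNzRingType) n (c x : R) (A : 'M[R]_n) :
  c * x = 0 -> c%:M *m (x *: A) = 0 /\ (x *: A) *m c%:M = 0.
Proof.
move=> h; rewrite mul_scalar_mx mul_mx_scalar scalerA h scale0r; by split.
Qed.

Lemma scalar_nz (R : comNzRingType) n (i0 : 'I_n) (c : R) : c != 0 -> (c%:M : 'M[R]_n) != 0.
Proof.
move=> nc; apply/negP => /eqP /matrixP /(_ i0 i0); rewrite !mxE eqxx mulr1n => /eqP.
by rewrite (negbTE nc).
Qed.

Lemma scale_nz (R : comNzRingType) n (x : R) (A : 'M[R]_n) : x *: A != 0 -> x != 0.
Proof. by apply: contraNneq => ->; rewrite scale0r. Qed.

Lemma delta_orth (R : comNzRingType) n (i0 i1 : 'I_n) (x : R) : i0 != i1 ->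
  (delta_mx i0 i0 : 'M[R]_n) *m (x *: delta_mx i1 i1) = 0 /\
  (x *: delta_mx i1 i1) *m (delta_mx i0 i0 : 'M[R]_n) = 0.
Proof.
move=> hi; rewrite -scalemxAr -scalemxAl !mul_delta_mx_cond (negbTE hi) eq_sym (negbTE hi).
by rewrite !mulr0n scaler0.
Qed.

Lemma delta_nz (R : comNzRingType) n (i0 i1 : 'I_n) (x : R) (l m : 'I_n) :
  i0 != i1 -> x != 0 -> (x *: delta_mx l m : 'M[R]_n) != 0.
Proof. by move=> hi nx; case: (delta_vertex hi l m nx). Qed.

Lemma upper4 (R : comNzRingType) n (i0 i1 : 'I_n) (a0 : R) : i0 != i1 ->
  a0 != 0 -> zero_divisor a0 ->
  overtex (delta_mx i0 i0 : 'M[R]_n) /\ ecc_le (delta_mx i0 i0 : 'M[R]_n) 4.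
Proof.
move=> hi na0 za0.
have hV : overtex (delta_mx i0 i0 : 'M[R]_n).
  by have := delta_vertex hi i0 i0 (oner_neq0 R); rewrite scale1r.
split => // W hW.
pose d := \det W; pose d' := if d == 0 then a0 else d.
have nd' : d' != 0 by rewrite /d'; case: (eqVneq d 0).
have [x0 [nx0 hx0]] : exists x0, x0 != 0 /\ d' * x0 = 0 /\ x0 * d = 0.
  rewrite /d'; case: (eqVneq d 0) => [->|nd].
    by case: za0 => y [ny hy]; exists y; rewrite mulr0.
  case: (det_zd hW) => y [ny hy]; exists y; split => //; rewrite -/d in hy; split => //.
  by rewrite mulrC.
have ex0 : exists x1, (fun x => x * d' = 0) x1 /\ x1 != 0 /\ x1 * \det W = 0.
  by exists x0; rewrite mulrC; case: hx0.
have [x [A [Jx [nY1 [h1 h2]]]]] := annG ex0.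
have nx := scale_nz nY1.
have [o1 o2] := @delta_orth R n i0 i1 x hi.
have [o3 o4] := @scal_orth R n d' x (delta_mx i1 i1) (etrans (mulrC d' x) Jx).
have [o5 o6] := @scal_orth R n d' x A (etrans (mulrC d' x) Jx).
have nV : (delta_mx i0 i0 : 'M[R]_n) != 0 by case: hV.
have nY3 := @delta_nz R n i0 i1 x i1 i1 hi nx.
have nY2 := @scalar_nz R n i0 d' nd'.
have nW : W != 0 by case: hW.
apply: (owithin_step (y := x *: A)); last exact: ostep_orth nY1 nW h2 h1.
apply: (owithin_step (y := d'%:M)); last exact: ostep_orth nY2 nY1 o5 o6.
apply: (owithin_step (y := x *: delta_mx i1 i1)); last exact: ostep_orth nY3 nY2 o4 o3.
apply: (owithin_step (y := delta_mx i0 i0)); last exact: ostep_orth nV nY3 o1 o2.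
by [].
Qed.

Lemma scal_scal (R : comNzRingType) n (a b : R) (M N : 'M[R]_n) :
  a * b = 0 -> (a *: M) *m (b *: N) = 0.
Proof. by move=> h; rewrite -scalemxAl -scalemxAr scalerA h scale0r. Qed.

Lemma upper3 (R : comNzRingType) n (i0 i1 : 'I_n) : i0 != i1 ->
  (forall a0 : R, zero_divisor a0 ->
        exists a1 a2 : R, a1 != 0 /\ a2 != 0 /\
          a0 * a1 = 0 /\ a1 * a0 = 0 /\ a0 * a2 = 0 /\ a2 * a0 = 0 /\
          a1 * a2 = 0 /\ a2 * a1 = 0) ->
  overtex (delta_mx i0 i0 : 'M[R]_n) /\ ecc_le (delta_mx i0 i0 : 'M[R]_n) 3.
Proof.
move=> hi cond.
have hV : overtex (delta_mx i0 i0 : 'M[R]_n).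
  by have := delta_vertex hi i0 i0 (oner_neq0 R); rewrite scale1r.
split => // W hW.
have [a1 [a2 [na1 [na2 [_ [h10 [_ [_ [h12 h21]]]]]]]]] := cond _ (det_zd hW).
have ex0 : exists x1, (fun x => x * a2 = 0) x1 /\ x1 != 0 /\ x1 * \det W = 0.
  by exists a1.
have [x [A [Jx [nY1 [h1 h2]]]]] := annG ex0.
have nx := scale_nz nY1.
have [o1 o2] := @delta_orth R n i0 i1 a2 hi.
have o3 := @scal_scal R n a2 x (delta_mx i1 i1) A (etrans (mulrC a2 x) Jx).
have o4 := @scal_scal R n x a2 A (delta_mx i1 i1) Jx.
have nV : (delta_mx i0 i0 : 'M[R]_n) != 0 by case: hV.
have nY2 := @delta_nz R n i0 i1 a2 i1 i1 hi na2.
have nW : W != 0 by case: hW.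
apply: (owithin_step (y := x *: A)); last exact: ostep_orth nY1 nW h2 h1.
apply: (owithin_step (y := a2 *: delta_mx i1 i1)); last exact: ostep_orth nY2 nY1 o3 o4.
apply: (owithin_step (y := delta_mx i0 i0)); last exact: ostep_orth nV nY2 o1 o2.
by [].
Qed.

Lemma upper2 (R : comNzRingType) n (i0 : 'I_n) (c : R) : c != 0 ->
  (forall a : R, zero_divisor a -> exists x : R, x != 0 /\ c * x = 0 /\ a * x = 0) ->
  overtex (c%:M : 'M[R]_n) /\ ecc_le (c%:M : 'M[R]_n) 2.
Proof.
move=> nc cond.
have nV := @scalar_nz R n i0 c nc.
have hV : overtex (c%:M : 'M[R]_n).
  have [x [nx [hcx _]]] := cond 0 (ex_intro _ 1 (conj (oner_neq0 R) (mul0r 1))).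
  have [o1 o2] := @scal_orth R n c x 1%:M hcx.
  have nx1 : x *: (1%:M : 'M[R]_n) != 0 by rewrite scalemx1; exact: scalar_nz.
  exact: vertex_of nV nx1 o1 o2.
split => // W hW.
have [x0 [nx0 [hc0 hd0]]] := cond _ (det_zd hW).
have ex0 : exists x1, (fun x => c * x = 0) x1 /\ x1 != 0 /\ x1 * \det W = 0.
  by exists x0; split => //; split => //; rewrite mulrC.
have [x [A [Jx [nY1 [h1 h2]]]]] := annG ex0.
have [o1 o2] := @scal_orth R n c x A Jx.
have nW : W != 0 by case: hW.
apply: (owithin_step (y := x *: A)); last exact: ostep_orth nY1 nW h2 h1.
apply: (owithin_step (y := c%:M)); last exact: ostep_orth nV nY1 o1 o2.
by [].
Qed.



Definition Umx (R : comNzRingType) n (k l : 'I_n) (a : R) : 'M[R]_n :=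
  \matrix_(i, j) (if (i == k) && (j == l) then 1 else if (i == l) && (j == k) then a
                  else if (i == j) && (i != k) && (i != l) then 1 else 0).

Lemma Umx_kl (R : comNzRingType) n (k l : 'I_n) (a : R) : Umx k l a k l = 1.
Proof. by rewrite mxE !eqxx. Qed.

Lemma Umx_lk (R : comNzRingType) n (k l : 'I_n) (a : R) : k != l -> Umx k l a l k = a.
Proof. move=> h; have h' : l != k by rewrite eq_sym.
by rewrite mxE !eqxx (negbTE h'). Qed.

Lemma Umx_ll (R : comNzRingType) n (k l : 'I_n) (a : R) : k != l -> Umx k l a l l = 0.
Proof. move=> h; have h' : l != k by rewrite eq_sym.
by rewrite mxE !eqxx (negbTE h') /=. Qed.

Lemma U_left (R : comNzRingType) n (k l : 'I_n) (a : R) (Y : 'M[R]_n) : k != l ->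
  Umx k l a *m Y = 0 -> (forall r m, r != k -> Y r m = 0) /\ (forall m, a * Y k m = 0).
Proof.
move=> hkl h; have e r m : (Umx k l a *m Y) r m = 0 by rewrite h mxE.
split.
- move=> r m hr; case: (eqVneq r l) => [->|hrl].
    have := e k m; rewrite mxE (bigD1 l) //= big1 ?addr0.
      by rewrite mxE !eqxx mul1r.
    move=> j hj; rewrite mxE eqxx (negbTE hj) (negbTE hkl) /=.
    by rewrite andbF mul0r.
  have := e r m; rewrite mxE (bigD1 r) //= big1 ?addr0.
    rewrite mxE (negbTE hr) (negbTE hrl) eqxx /=. by rewrite mul1r.
  move=> j hj; rewrite mxE (negbTE hr) (negbTE hrl) /=.
  by rewrite eq_sym (negbTE hj) mul0r.
- move=> m; have := e l m; rewrite mxE (bigD1 k) //= big1 ?addr0.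
    by rewrite mxE eq_sym (negbTE hkl) !eqxx.
  move=> j hj; rewrite mxE eq_sym (negbTE hkl) eqxx (negbTE hj) /=.
  by rewrite !andbF mul0r.
Qed.

Lemma U_right (R : comNzRingType) n (k l : 'I_n) (a : R) (Y : 'M[R]_n) : k != l ->
  Y *m Umx k l a = 0 -> (forall r m, m != l -> Y r m = 0) /\ (forall r, Y r l * a = 0).
Proof.
move=> hkl h; have hlk : l != k by rewrite eq_sym. have e r m : (Y *m Umx k l a) r m = 0 by rewrite h mxE.
split.
- move=> r m hm; case: (eqVneq m k) => [->|hmk].
    have := e r l; rewrite mxE (bigD1 k) //= big1 ?addr0.
      by rewrite mxE !eqxx mulr1.
    move=> j hj; rewrite mxE (negbTE hj) eqxx /=.
    case: (eqVneq j l) => [->|hjl] /=; first by rewrite (negbTE hlk) mulr0.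
    by rewrite mulr0.
  have := e r m; rewrite mxE (bigD1 m) //= big1 ?addr0.
    rewrite mxE (negbTE hm) (negbTE hmk) eqxx /=. by rewrite mulr1.
  move=> j hj; rewrite mxE (negbTE hm) (negbTE hmk) /= !andbF.
  by rewrite (negbTE hj) mulr0.
- move=> r; have := e r k; rewrite mxE (bigD1 l) //= big1 ?addr0.
    by rewrite mxE (negbTE hlk) !eqxx /=.
  move=> j hj; rewrite mxE (negbTE hj) (negbTE hkl) eqxx /= andbF.
  case: (eqVneq j k) => [->|hjk] /=; last by rewrite mulr0.
  by rewrite ?eqxx /= ?andbF mulr0.
Qed.

Lemma U_vertex (R : comNzRingType) n (k l : 'I_n) (a : R) : k != l ->
  zero_divisor a -> overtex (Umx k l a).
Proof.
move=> hkl [y [ny hy]]; have hlk : l != k by rewrite eq_sym.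
have nU : Umx k l a != 0.
  by apply/negP => /eqP /matrixP /(_ k l); rewrite Umx_kl mxE => /eqP; rewrite oner_eq0.
have nY : y *: delta_mx k l != 0 :> 'M[R]_n.
  apply/negP => /eqP /matrixP /(_ k l); rewrite !mxE !eqxx mulr1 => /eqP.
  by rewrite (negbTE ny).
have h1 : Umx k l a *m (y *: delta_mx k l) = 0.
  apply/matrixP => r m; rewrite !mxE (bigD1 k) //= big1 ?addr0.
    rewrite !mxE eqxx (negbTE hkl) andbF /=.
    case: (eqVneq r l) => [er|hrl] /=; first by rewrite mulrA hy mul0r.
    by rewrite andbT andbN mul0r.
  by move=> j hj; rewrite !mxE (negbTE hj) /= mulr0 mulr0.
have h2 : (y *: delta_mx k l) *m Umx k l a = 0.
  apply/matrixP => r m; rewrite !mxE (bigD1 l) //= big1 ?addr0.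
    rewrite !mxE eqxx (negbTE hlk) /=.
    case: (eqVneq m k) => [em|hmk] /=; first by rewrite mulrC mulrA hy mul0r.
    by rewrite andbF mulr0.
  by move=> j hj; rewrite !mxE (negbTE hj) andbF /= mulr0 mul0r.
exact: vertex_of nU nY h1 h2.
Qed.

Lemma center2_cond (R : comNzRingType) n (V : 'M[R]_n) (k l m0 : 'I_n) :
  k != l -> V l m0 != 0 -> (forall a, V != Umx k l a) -> ecc_le V 2 ->
  forall a, zero_divisor a -> exists x, x != 0 /\ V l m0 * x = 0 /\ a * x = 0.
Proof.
move=> hkl hV hU hecc a za.
have hlk : l != k by rewrite eq_sym.
have := hecc _ (U_vertex hkl za).
have adjV : ~ oadj V (Umx k l a).
  move=> [_ [_ [_ [_ h]]]]; have [h1 _] := U_left hkl h.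
  by move: hV; rewrite h1 ?eqxx.
case=> [[e|[z [e h]]]|[z [[e|[z' [e' h']]] hz]]].
- by move: (hU a); rewrite e eqxx.
- by case: adjV; rewrite e.
- by case: adjV; rewrite e.
- subst z'.
  case: hz => [hz1 [_ [_ [hzU hUz]]]].
  have [l1 l2] := U_left hkl hUz; have [r1 r2] := U_right hkl hzU.
  have nzkl : z k l != 0.
    apply/negP => /eqP h0; case: hz1 => /nz_entry [r [m hrm]] _.
    case: (eqVneq r k) => [er|hr]; last by move: hrm; rewrite l1 ?eqxx.
    case: (eqVneq m l) => [em|hm]; last by move: hrm; rewrite r1 ?eqxx.
    by move: hrm; rewrite er em h0 eqxx.
  exists (z k l); split => //; split => //.
  case: h' => [_ [_ [_ [_ hzV]]]].
  move/matrixP: hzV => /(_ k m0); rewrite !mxE (bigD1 l) //= big1 ?addr0.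
    by rewrite mulrC.
  by move=> j hj; rewrite r1 ?mul0r.
Qed.

Lemma center2 (R : comNzRingType) n (i0 i1 : 'I_n) (V : 'M[R]_n) : i0 != i1 ->
  overtex V -> ecc_le V 2 ->
  exists c : R, c != 0 /\ forall a : R, zero_divisor a ->
    exists x : R, x != 0 /\ c * x = 0 /\ a * x = 0.
Proof.
move=> hi hV hecc.
have [i [j hij]] := nz_entry (proj1 hV).
case: (eqVneq i j) => [eij|nij].
  subst j; have [k hk] := other hi i.
  exists (V i i); split => //; apply: (center2_cond hk hij) => // a.
  apply/negP => /eqP e; move: hij; rewrite e Umx_ll ?eqxx //.
have nji : j != i by rewrite eq_sym.
case: (classic (exists a, V = Umx j i a)) => [[a ea]|H]; last first.
  exists (V i j); split => //; apply: (center2_cond nji hij) => // a.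
  by apply/negP => /eqP e; apply: H; exists a.
have hVji : V j i = 1 by rewrite ea Umx_kl.
exists (V j i); split; first by rewrite hVji oner_eq0.
apply: (center2_cond nij) => //; first by rewrite hVji oner_eq0.
move=> b; apply/negP => /eqP eb.
have a1 : a = 1.
  by have := Umx_lk a nji; rewrite -ea eb Umx_kl.
case: hV => _ [[Y [nY hY]] _].
have [h1 h2] := U_left nji (etrans (esym (congr1 (fun M => M *m Y) ea)) hY).
move: nY; rewrite a1 in h2 => /negP; apply; apply/eqP/matrixP => r m.
rewrite mxE; case: (eqVneq r j) => [->|hr]; last exact: h1.
by have := h2 m; rewrite mul1r.
Qed.


Unset Implicit Arguments.

Theorem theorem2 (R : comNzRingType) (n : nat) (hn : (1 < n)%N)
  (hZ : exists a : R, a != 0 /\ zero_divisor a) :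
  exists r : nat, is_radius R n r /\
    ((2 <= r <= 4)%N) /\
    ((forall a0 : R, zero_divisor a0 ->
        exists a1 a2 : R, a1 != 0 /\ a2 != 0 /\
          a0 * a1 = 0 /\ a1 * a0 = 0 /\ a0 * a2 = 0 /\ a2 * a0 = 0 /\
          a1 * a2 = 0 /\ a2 * a1 = 0) ->
      r = 2%N \/ r = 3%N) /\
    (r = 2%N <->
      exists c : R, c != 0 /\ forall a : R, zero_divisor a ->
        exists x : R, x != 0 /\ c * x = 0 /\ a * x = 0).
Proof.
pose i0 : 'I_n := @Ordinal n 0 (ltnW hn).
pose i1 : 'I_n := @Ordinal n 1 hn.
have hi : i0 != i1 by [].
have [a0 [na0 za0]] := hZ.
pose P k := exists v : 'M[R]_n, overtex v /\ ecc_le v k.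
have P4 : P 4%N by exists (delta_mx i0 i0); exact: upper4 hi na0 za0.
have [r [Pr minr]] := min_ex (ex_intro P 4%N P4).
have r2 : (2 <= r)%N.
  case: Pr => v [hv he]; exact: @ecc_ge2 R n i0 i1 hi v hv r he.
have r4 : (r <= 4)%N by apply: minr.
exists r; split.
  split => // v hv k hk; apply: minr; by exists v.
split; first by rewrite r2 r4.
split.
  move=> cond; have r3 : (r <= 3)%N.
    by apply: minr; exists (delta_mx i0 i0); exact: upper3 hi cond.
  lia.
split.
  move=> er; case: Pr => v [hv he]; rewrite er in he; exact: center2 hi hv he.
move=> [c [nc cond]].
have : (r <= 2)%N by apply: minr; exists (c%:M : 'M[R]_n); exact: (@upper2 R n i0 c nc cond).
lia.
Qed.
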